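(* Let $K$ be a Barański sponge in $\mathbb R^d$ with associated sets $Q_n$. Then $K$ is connected if and only if $Q_{d+1}$ is connected.
   Context: Let $d\ge2$ and integers $N_1,\dots,N_d\ge2$. For each $1\le i\le d$ let $(p_{i,1},\dots,p_{i,N_i})$ be a probability vector (positive entries summing to 1), and set $q_{i,1}=0$, $q_{i,j}=\sum_{\ell<j}p_{i,\ell}$. Let $\mathcal D\subset\{(j_1,\dots,j_d):1\le j_i\le N_i\}$ with $1<|\mathcal D|<\prod_iN_i$. For $w=(j_1,\dots,j_d)\in\mathcal D$ define $\psi_w(x_1,\dots,x_d)=(p_{1,j_1}x_1+q_{1,j_1},\dots,p_{d,j_d}x_d+q_{d,j_d})$. The Barański sponge $K$ is the unique nonempty compact set with $K=\bigcup_{w\in\mathcal D}\psi_w(K)$. Set $Q_0=[0,1]^d$ and $Q_n=\bigcup_{w\in\mathcal D}\psi_w(Q_{n-1})$ for $n\ge1$. *)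

(* Defs.v *)
From HB Require Import structures.
From mathcomp Require Import all_boot all_order all_algebra.
From mathcomp Require Import all_classical all_reals all_analysis.
Set Implicit Arguments. Unset Strict Implicit. Unset Printing Implicit Defensive.
Import Order.TTheory GRing.Theory Num.Theory.
Import numFieldNormedType.Exports.
Local Open Scope classical_set_scope.
Local Open Scope ring_scope.

(* Digits are 0-indexed: j ranges over 0 <= j < N i (paper: 1 <= j <= N_i).
   Points of R^d are row vectors 'rV[R]_d (product topology). *)

Definition bq (R : realType) (d : nat) (p : 'I_d -> nat -> R) (i : 'I_d) (j : nat) : R :=
  \sum_(l < j) p i l.

Definition bpsi (R : realType) (d : nat) (p : 'I_d -> nat -> R)
  (w : {ffun 'I_d -> nat}) (x : 'rV[R]_d) : 'rV[R]_d :=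
  \row_(i < d) (p i (w i) * x ord0 i + bq p i (w i)).

Definition unit_cube (R : realType) (d : nat) : set 'rV[R]_d :=
  [set x | forall i : 'I_d, 0 <= x ord0 i <= 1].

Fixpoint bQ (R : realType) (d : nat) (p : 'I_d -> nat -> R)
  (D : seq {ffun 'I_d -> nat}) (n : nat) : set 'rV[R]_d :=
  match n with
  | 0 => @unit_cube R d
  | n'.+1 => \bigcup_(w in [set` D]) (bpsi p w @` bQ p D n')
  end.

(* Main.v *)
Require Import Defs.
From HB Require Import structures.
From mathcomp Require Import all_boot all_order all_algebra.
From mathcomp Require Import all_classical all_reals all_analysis.
From mathcomp Require Import ring lra.
Import Order.TTheory GRing.Theory Num.Theory.
Import numFieldNormedType.Exports.
Local Open Scope classical_set_scope.
Local Open Scope ring_scope.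
Set Implicit Arguments. Unset Strict Implicit. Unset Printing Implicit Defensive.
Section Barans.
Variable R : realType.
Variable d : nat.
Variable N : 'I_d -> nat.
Variable p : 'I_d -> nat -> R.
Hypothesis Hp : forall i j, (j < N i)%N -> 0 < p i j.
Hypothesis Hs : forall i, \sum_(j < N i) p i j = 1.

Lemma bq0 i : bq p i 0 = 0.
Proof. by rewrite /bq big_ord0. Qed.
Lemma bqS i j : bq p i j.+1 = bq p i j + p i j.
Proof. by rewrite /bq big_ord_recr. Qed.
Lemma bqN i : bq p i (N i) = 1.
Proof. exact: Hs. Qed.
Lemma bq_mono i j k : (j <= k)%N -> (k <= N i)%N -> bq p i j <= bq p i k.
Proof.
move=> jk; elim: k jk => [|k IH]; first by rewrite leqn0 => /eqP ->.
rewrite leq_eqVlt => /orP[/eqP -> //|jk] kN.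
rewrite bqS; apply: (le_trans (IH jk (ltnW kN))).
by rewrite lerDl ltW // Hp.
Qed.
Lemma bq_ge0 i j : (j <= N i)%N -> 0 <= bq p i j.
Proof. move=> jN; rewrite -(bq0 i); exact: bq_mono. Qed.
Lemma bq_le1 i j : (j <= N i)%N -> bq p i j <= 1.
Proof. move=> jN; rewrite -(bqN i); exact: bq_mono. Qed.
Lemma bq_strict i j k : (j < k)%N -> (k <= N i)%N -> bq p i j.+1 <= bq p i k.
Proof. move=> jk kN; exact: bq_mono. Qed.
Lemma bq_lt i j k : (j < k)%N -> (k <= N i)%N -> bq p i j < bq p i k.
Proof.
move=> jk kN; have h := bq_strict (i:=i) jk kN.
apply: lt_le_trans h; by rewrite bqS ltrDl Hp // (leq_trans jk kN).
Qed.
Lemma p_lt1 i j : (1 < N i)%N -> (j < N i)%N -> p i j < 1.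
Proof.
move=> N1 jN; have e : p i j = bq p i j.+1 - bq p i j by rewrite bqS addrC addKr.
rewrite e; case: (ltngtP j.+1 (N i)) => [jN'||jN'].
- have h1 := bq_lt (i:=i) jN' (leqnn _).
  have h2 := bq_ge0 (i:=i) (ltnW jN). rewrite bqN in h1. lra.
- by rewrite ltnS leqNgt jN.
- have j0 : (0 < j)%N by rewrite -ltnS jN'.
  have h1 := bq_lt (i:=i) j0 (ltnW jN). rewrite bq0 in h1.
  rewrite jN' bqN. lra.
Qed.
Lemma psi1_eq i a b x y : (a < N i)%N -> (b < N i)%N -> 0 <= x <= 1 -> 0 <= y <= 1 ->
  p i a * x + bq p i a = p i b * y + bq p i b ->
  (a = b /\ x = y) \/ (a.+1 = b /\ x = 1 /\ y = 0) \/ (b.+1 = a /\ x = 0 /\ y = 1).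
Proof.
move=> aN bN /andP[x0 x1] /andP[y0 y1] E.
have pa := Hp aN; have pb := Hp bN.
case: (ltngtP a b) => [ab|ba|ab].
- right; left.
  have h := bq_strict (i:=i) ab (ltnW bN); rewrite bqS in h.
  have xa : p i a * x <= p i a by rewrite ler_piMr // ltW.
  have yb : 0 <= p i b * y by rewrite mulr_ge0 // ltW.
  case: (ltngtP a.+1 b) => [ab'|ab'|ab'].
  + have h' := bq_lt (i:=i) ab' (ltnW bN); rewrite bqS in h'. lra.
  + rewrite ltnS leqNgt ab in ab'; by [].
  + subst b; rewrite bqS in E.
    have yz : p i a.+1 * y = 0 by lra.
    have xz : p i a * (1 - x) = 0 by lra.
    move: yz xz => /eqP; rewrite mulf_eq0 gt_eqF //= => /eqP ->.
    move/eqP; rewrite mulf_eq0 gt_eqF //= subr_eq0 => /eqP <-; by [].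
- right; right.
  have h := bq_strict (i:=i) ba (ltnW aN); rewrite bqS in h.
  have xa : p i b * y <= p i b by rewrite ler_piMr // ltW.
  have yb : 0 <= p i a * x by rewrite mulr_ge0 // ltW.
  case: (ltngtP b.+1 a) => [ab'|ab'|ab'].
  + have h' := bq_lt (i:=i) ab' (ltnW aN); rewrite bqS in h'. lra.
  + rewrite ltnS leqNgt ba in ab'; by [].
  + subst a; rewrite bqS in E.
    have yz : p i b.+1 * x = 0 by lra.
    have xz : p i b * (1 - y) = 0 by lra.
    move: yz xz => /eqP; rewrite mulf_eq0 gt_eqF //= => /eqP ->.
    move/eqP; rewrite mulf_eq0 gt_eqF //= subr_eq0 => /eqP <-; by [].
- left; subst b; split => //.
  have : p i a * (x - y) = 0 by lra.
  by move/eqP; rewrite mulf_eq0 gt_eqF //= subr_eq0 => /eqP.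
Qed.

Lemma psi1_0 i a x : (a < N i)%N -> 0 <= x <= 1 ->
  p i a * x + bq p i a = 0 -> a = 0%N /\ x = 0.
Proof.
move=> aN /andP[x0 x1] E; have pa := Hp aN.
have xa : 0 <= p i a * x by rewrite mulr_ge0 // ltW.
have q0 := bq_ge0 (i:=i) (ltnW aN).
have qa : bq p i a = 0 by lra.
have pz : p i a * x = 0 by lra.
split; last by move: pz => /eqP; rewrite mulf_eq0 gt_eqF //= => /eqP.
case: (posnP a) => // a0.
have := bq_lt (i:=i) a0 (ltnW aN); rewrite bq0 qa ltxx; by [].
Qed.

Lemma psi1_1 i a x : (a < N i)%N -> 0 <= x <= 1 ->
  p i a * x + bq p i a = 1 -> a.+1 = N i /\ x = 1.
Proof.
move=> aN /andP[x0 x1] E; have pa := Hp aN.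
have xa : p i a * x <= p i a by rewrite ler_piMr // ltW.
have q1 := bq_le1 (i:=i) aN; rewrite bqS in q1.
have qa : bq p i a + p i a = 1 by lra.
have pz : p i a * (1 - x) = 0 by lra.
split; last first.
  by move: pz => /eqP; rewrite mulf_eq0 gt_eqF //= subr_eq0 => /eqP <-.
case: (ltngtP a.+1 (N i)) => // [aN'|]; last by rewrite ltnS leqNgt aN.
have := bq_lt (i:=i) aN' (leqnn _); rewrite bqS bqN qa ltxx; by [].
Qed.

Lemma psi1_range i a x : (a < N i)%N -> 0 <= x <= 1 ->
  0 <= p i a * x + bq p i a <= 1.
Proof.
move=> aN /andP[x0 x1]; have pa := Hp aN.
have xa : p i a * x <= p i a by rewrite ler_piMr // ltW.
have xb : 0 <= p i a * x by rewrite mulr_ge0 // ltW.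
have q1 := bq_le1 (i:=i) aN; rewrite bqS in q1.
have q0 := bq_ge0 (i:=i) (ltnW aN).
apply/andP; split; lra.
Qed.

Definition face (al : 'I_d -> option bool) (x : 'rV[R]_d) :=
  forall i, match al i with Some b => x ord0 i = (if b then 1 else 0) | None => True end.
Definition dmatch (al : 'I_d -> option bool) (a : {ffun 'I_d -> nat}) :=
  forall i, match al i with Some true => (a i).+1 = N i | Some false => a i = 0%N | None => True end.
Definition ext (al : 'I_d -> option bool) (a b : {ffun 'I_d -> nat}) : 'I_d -> option bool :=
  fun i => match al i with Some s => Some s | None => if a i == b i then None else Some (a i < b i)%N end.
Definition adjf (al : 'I_d -> option bool) (a b : {ffun 'I_d -> nat}) :=
  forall i, al i = None -> (a i = b i \/ (a i).+1 = b i \/ (b i).+1 = a i).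
Definition samedom (al be : 'I_d -> option bool) := forall i, (al i == None) = (be i == None).
Definition valid (a : {ffun 'I_d -> nat}) := forall i, (a i < N i)%N.

Lemma bpsiE w x i : bpsi p w x ord0 i = p i (w i) * x ord0 i + bq p i (w i).
Proof. by rewrite mxE. Qed.

Lemma PL_fwd al be a b x y : valid a -> valid b -> unit_cube x -> unit_cube y ->
  samedom al be ->
  face al (bpsi p a x) -> face be (bpsi p b y) ->
  (forall i, al i = None -> bpsi p a x ord0 i = bpsi p b y ord0 i) ->
  dmatch al a /\ dmatch be b /\ adjf al a b /\ face (ext al a b) x /\ face (ext be b a) y /\
      (forall i, ext al a b i = None -> x ord0 i = y ord0 i).
Proof.
move=> va vb cx cy sd fx fy fe.
have side : forall c z (ga : 'I_d -> option bool) i, valid c -> unit_cube z ->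
    face ga (bpsi p c z) -> match ga i with
    | Some true => (c i).+1 = N i /\ z ord0 i = 1
    | Some false => c i = 0%N /\ z ord0 i = 0 | None => True end.
  move=> c z ga i vc cz fz; move: (fz i); rewrite bpsiE.
  case: (ga i) => // [[]] E.
  - exact: psi1_1 (vc i) (cz i) E.
  - exact: psi1_0 (vc i) (cz i) E.
split; [|split; [|split; [|split; [|split]]]].
- move=> i; have := side _ _ _ i va cx fx; case: (al i) => // [[]] [] //.
- move=> i; have := side _ _ _ i vb cy fy; case: (be i) => // [[]] [] //.
- move=> i ali; have := fe i ali; rewrite !bpsiE => E.
  case: (psi1_eq (va i) (vb i) (cx i) (cy i) E) => [[-> _]|[[<- _]|[<- _]]]; tauto.
- move=> i; rewrite /ext; have := side _ _ _ i va cx fx.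
  case E: (al i) => [[]|] //; try by case.
  have := fe i E; rewrite !bpsiE => E2.
  case: (psi1_eq (va i) (vb i) (cx i) (cy i) E2) => [[-> _]|[[<- [-> _]]|[<- [-> _]]]].
  + by rewrite eqxx.
  + by rewrite (ltn_eqF (ltnSn _)) ltnSn.
  + by rewrite (gtn_eqF (ltnSn _)) ltnNge leqnSn.
- move=> i; rewrite /ext; have := side _ _ _ i vb cy fy.
  move: (sd i); case E: (be i) => [[]|]; try by move=> _ [].
  case E': (al i) => [?|] // _ _.
  have := fe i E'; rewrite !bpsiE => E2.
  case: (psi1_eq (va i) (vb i) (cx i) (cy i) E2) => [[-> _]|[[<- [_ ->]]|[<- [_ ->]]]].
  + by rewrite eqxx.
  + by rewrite (gtn_eqF (ltnSn _)) ltnNge leqnSn.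
  + by rewrite (ltn_eqF (ltnSn _)) ltnSn.
- move=> i; rewrite /ext; case E: (al i) => [?|] //.
  have := fe i E; rewrite !bpsiE => E2.
  case: (psi1_eq (va i) (vb i) (cx i) (cy i) E2) => [[_ ->]|[[<- _]|[<- _]]] //.
  + by rewrite (ltn_eqF (ltnSn _)).
  + by rewrite (gtn_eqF (ltnSn _)).
Qed.

Lemma bq_top i a : (a.+1 = N i)%N -> p i a + bq p i a = 1.
Proof. by move=> E; rewrite addrC -bqS E bqN. Qed.

Lemma PL_bwd al be a b x y : samedom al be ->
  dmatch al a -> dmatch be b -> adjf al a b -> face (ext al a b) x -> face (ext be b a) y ->
  (forall i, ext al a b i = None -> x ord0 i = y ord0 i) ->
  face al (bpsi p a x) /\ face be (bpsi p b y) /\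
  (forall i, al i = None -> bpsi p a x ord0 i = bpsi p b y ord0 i).
Proof.
move=> sd ma mb ad fx fy fe; split; [|split].
- move=> i; rewrite bpsiE; move: (ma i) (fx i); rewrite /ext.
  case: (al i) => // [[]] E ->.
  + by rewrite mulr1 bq_top.
  + by rewrite E mulr0 bq0 addr0.
- move=> i; rewrite bpsiE; move: (mb i) (fy i) (sd i); rewrite /ext.
  case: (be i) => // [[]] E ->.
  + by rewrite mulr1 bq_top.
  + by rewrite E mulr0 bq0 addr0.
- move=> i ali; rewrite !bpsiE; have := sd i; rewrite ali; case E: (be i) => [?|] // _.
  move: (fx i) (fy i) (fe i); rewrite /ext ali E.
  case: (ad i ali) => [->|[<-|<-]].
  + by rewrite eqxx => _ _ /(_ erefl) ->.
  + rewrite (ltn_eqF (ltnSn _)) (gtn_eqF (ltnSn _)) ltnSn ltnNge leqnSn /= => -> -> _.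
    by rewrite mulr1 mulr0 add0r bqS addrC.
  + rewrite (ltn_eqF (ltnSn _)) (gtn_eqF (ltnSn _)) ltnSn ltnNge leqnSn /= => -> -> _.
    by rewrite mulr1 mulr0 add0r bqS addrC.
Qed.

Lemma geo (c e : R) : 0 <= c < 1 -> 0 < e -> exists n, c ^+ n < e.
Proof.
move=> /andP[c0 c1] e0.
have : `|c| < 1 by rewrite ger0_norm.
move/cvg_expr/cvgr0Pnorm_lt => /(_ e e0) [n _ Hn].
exists n; have := Hn n (leqnn n); rewrite /= ger0_norm //; exact: exprn_ge0.
Qed.

Lemma seq_ubound (T : eqType) (s : seq T) (f : T -> R) :
  (forall t, t \in s -> f t < 1) -> exists c, 0 < c < 1 /\ forall t, t \in s -> f t <= c.
Proof.
elim: s => [|a s IH] H.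
  exists (2^-1); split; [apply/andP; split; lra | by []].
have [c [/andP[c0 c1] Hc]] : exists c, 0 < c < 1 /\ forall t, t \in s -> f t <= c.
  by apply: IH => t ts; apply: H; rewrite inE ts orbT.
exists (Num.max c (f a)); split.
  apply/andP; split; first by rewrite lt_max c0.
  by rewrite gt_max c1 H // inE eqxx.
move=> t; rewrite inE => /orP[/eqP ->|ts]; first by rewrite le_max lexx orbT.
by rewrite le_max Hc.
Qed.

Lemma seq_lbound (T : eqType) (s : seq T) (f : T -> R) :
  (forall t, t \in s -> 0 < f t) -> exists2 e, 0 < e & forall t, t \in s -> e <= f t.
Proof.
elim: s => [|a s IH] H; first by exists 1.
have [e e0 He] : exists2 e, 0 < e & forall t, t \in s -> e <= f t.
  by apply: IH => t ts; apply: H; rewrite inE ts orbT.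
exists (Num.min e (f a)); first by rewrite lt_min e0 H // inE eqxx.
move=> t; rewrite inE => /orP[/eqP ->|ts]; first by rewrite ge_min lexx orbT.
by rewrite ge_min He.
Qed.

Hypothesis HN : forall i, (2 <= N i)%N.

Lemma contr : exists c, 0 < c < 1 /\ forall a i, valid a -> p i (a i) <= c.
Proof.
pose s := [seq (i, j) | i <- enum 'I_d, j <- iota 0 (N i)].
case: (@seq_ubound _ s (fun ij => p ij.1 ij.2)); last first.
  move=> c [c01 Hc].
  exists c; split => // a i va; apply: (Hc (i, a i)).
  by apply: (@allpairs_f_dep _ (fun=> nat) _ (fun i j => (i, j))); rewrite ?mem_enum // mem_iota add0n va.
  move=> [i j] /allpairsPdep [i' [j' [_ + [-> ->]]]]; rewrite mem_iota add0n => /= jN.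
exact: p_lt1.
Qed.

Lemma psi_cube a x : valid a -> unit_cube x -> unit_cube (bpsi p a x).
Proof. by move=> va cx i; rewrite bpsiE; apply: psi1_range. Qed.

Lemma entry_le_norm (v : 'rV[R]_d) i : `|v ord0 i| <= `|v|.
Proof.
have /mapP[j Hj ->] : `|v ord0 i| \in [seq `|v x.1 x.2| | x : 'I_1 * 'I_d].
  by apply/mapP; exists (ord0, i) => //=; rewrite mem_enum.
by rewrite [leRHS]/Num.norm /= mx_normrE; apply/bigmax_geP; right => /=; exists j.
Qed.

Variable D : seq {ffun 'I_d -> nat}.
Hypothesis HD : forall w, w \in D -> forall i, (w i < N i)%N.
Variable K : set 'rV[R]_d.
Hypothesis Kcomp : compact K.
Hypothesis Kne : K !=set0.
Hypothesis Kfix : K = \bigcup_(w in [set` D]) (bpsi p w @` K).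

Lemma bigcupP (X : set 'rV[R]_d) z :
  (\bigcup_(w in [set` D]) (bpsi p w @` X)) z <-> exists w x, w \in D /\ X x /\ bpsi p w x = z.
Proof.
split; first by move=> [w /= wD [x Xx <-]]; exists w, x.
by move=> [w [x [wD [Xx <-]]]]; exists w => //; exists x.
Qed.

Lemma validD w : w \in D -> valid w.
Proof. exact: HD. Qed.

Lemma K_psi w x : w \in D -> K x -> K (bpsi p w x).
Proof. move=> wD Kx; rewrite Kfix; apply/bigcupP; exists w, x; tauto. Qed.

Lemma K_dec x : K x -> exists w y, w \in D /\ K y /\ bpsi p w y = x.
Proof. by rewrite {1}Kfix => /bigcupP. Qed.

Lemma bQ_cube n : bQ p D n `<=` unit_cube (R:=R) (d:=d).
Proof.
elim: n => [|n IH] x //= /bigcupP [w [y [wD [Qy <-]]]].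
apply: psi_cube; [exact: validD | exact: IH].
Qed.

Lemma K_bound : exists2 M, 0 <= M & forall x i, K x -> `|x ord0 i| <= M.
Proof.
have [M [Mreal HM]] := compact_bounded Kcomp.
exists (`|M| + 1); first by rewrite addr_ge0.
move=> x i Kx; apply: (le_trans (entry_le_norm x i)).
apply: (HM (`|M| + 1)) => //.
have := real_ler_norm Mreal; lra.
Qed.

Lemma K_cube : K `<=` unit_cube (R:=R) (d:=d).
Proof.
have [M M0 HM] := K_bound.
have [c [/andP[c0 c1] Hc]] := contr.
have H : forall n x i, K x -> -(c ^+ n * M) <= x ord0 i <= 1 + c ^+ n * M.
  elim => [|n IH] x i Kx.
    rewrite expr0 mul1r; have := HM x i Kx; rewrite ler_norml => /andP[h1 h2].
    apply/andP; split; lra.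
  have [w [y [wD [Ky <-]]]] := K_dec Kx.
  rewrite bpsiE; have /andP[y1 y2] := IH y i Ky.
  have vw := validD wD.
  have pc := Hc w i vw; have pp := Hp (vw i).
  have q0 := bq_ge0 (i:=i) (ltnW (vw i)).
  have q1 := bq_le1 (i:=i) (vw i); rewrite bqS in q1.
  have t0 : 0 <= c ^+ n * M by rewrite mulr_ge0 // exprn_ge0 // ltW.
  rewrite exprS -mulrA.
  set t := c ^+ n * M in t0 y1 y2 *.
  apply/andP; split; nra.
move=> x Kx i; apply/andP; split.
  rewrite leNgt; apply/negP => xn.
  have [n Hn] := @geo c (- x ord0 i / (M + 1)) (ltac:(rewrite (ltW c0) c1 //)) (ltac:(apply: divr_gt0; lra)).
  have := H n x i Kx => /andP[h _].
  have cn0 : 0 <= c ^+ n by rewrite exprn_ge0 // ltW.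
  rewrite ltr_pdivlMr in Hn; last lra.
  nra.
rewrite leNgt; apply/negP => xn.
have [n Hn] := @geo c ((x ord0 i - 1) / (M + 1)) (ltac:(rewrite (ltW c0) c1 //)) (ltac:(apply: divr_gt0; lra)).
have := H n x i Kx => /andP[_ h].
have cn0 : 0 <= c ^+ n by rewrite exprn_ge0 // ltW.
rewrite ltr_pdivlMr in Hn; last lra.
nra.
Qed.

Lemma K_bQ n : K `<=` bQ p D n.
Proof.
elim: n => [|n IH]; first exact: K_cube.
move=> x /K_dec [w [y [wD [Ky <-]]]] /=; apply/bigcupP; exists w, y; split; [done|split; [exact: IH|done]].
Qed.

Lemma ballE (x y : 'rV[R]_d) e : ball x e y <-> (0 < e /\ forall i, `|x ord0 i - y ord0 i| < e).
Proof.
split.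
- move=> [e0 H]; split => // i; move: (H ord0 i). rewrite -ball_normE /=. done.
- move=> [e0 H]; split => // i j; rewrite (ord1 i) -ball_normE /=; exact: H.
Qed.

Lemma Kclosed : closed K.
Proof. apply: compact_closed Kcomp; exact: norm_hausdorff. Qed.

Lemma iter_psi a z k n i : bpsi p a z = z ->
  iter n (bpsi p a) k ord0 i - z ord0 i = p i (a i) ^+ n * (k ord0 i - z ord0 i).
Proof.
move=> fz; elim: n => [|n IH]; first by rewrite expr0 mul1r.
have fzi : z ord0 i = p i (a i) * z ord0 i + bq p i (a i) by rewrite -{1}fz bpsiE.
rewrite iterS bpsiE exprS -mulrA -IH {1}fzi; ring.
Qed.

Lemma fixK a : a \in D -> exists z, K z /\ bpsi p a z = z.
Proof.
move=> aD; have va := validD aD.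
pose z : 'rV[R]_d := \row_i (bq p i (a i) / (1 - p i (a i))).
have p1 : forall i, 1 - p i (a i) != 0.
  by move=> i; rewrite subr_eq0 eq_sym lt_eqF // p_lt1.
have fz : bpsi p a z = z.
  apply/rowP => i; rewrite bpsiE !mxE; field; exact: p1.
have zc : unit_cube z.
  move=> i; rewrite mxE; have pp := Hp (va i); have pl := p_lt1 (HN i) (va i).
  have q0 := bq_ge0 (i:=i) (ltnW (va i)).
  have q1 := bq_le1 (i:=i) (va i); rewrite bqS in q1.
  apply/andP; split; first by rewrite divr_ge0 // subr_ge0 ltW.
  by rewrite ler_pdivrMr ?subr_gt0 // mul1r lerBrDr.
exists z; split => //.
rewrite ((closure_id K).1 Kclosed) => B /nbhs_ballP [e e0 He].
have [c [/andP[c0 c1] Hc]] := contr.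
have [n Hn] := @geo c e (ltac:(rewrite (ltW c0) c1 //)) e0.
have [k Kk] := Kne.
exists (iter n (bpsi p a) k); split.
  by elim: n {Hn} => [|n IH] //=; apply: K_psi.
apply: He; apply/ballE; split => // i.
rewrite -normrN opprB iter_psi // normrM normrX.
have kc := K_cube Kk i; have zci := zc i.
have h1 : `|k ord0 i - z ord0 i| <= 1.
  rewrite ler_norml; move: kc zci => /andP[? ?] /andP[? ?]; apply/andP; split; lra.
have h2 : `|p i (a i)| ^+ n <= c ^+ n.
  have pc : `|p i (a i)| <= c by rewrite ger0_norm; [exact: Hc | exact: ltW (Hp (va i))].
  elim: n {Hn} => [|n IH]; first by rewrite !expr0.
  by rewrite !exprS ler_pM.
apply: (le_lt_trans _ Hn); rewrite -[c ^+ n]mulr1; apply: ler_pM => //.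
Qed.

Definition Icond (X : set 'rV[R]_d) al be := exists x y, X x /\ X y /\ face al x /\ face be y /\
  (forall i, al i = None -> x ord0 i = y ord0 i).

Definition fc (al : 'I_d -> option bool) := #|[set i | al i == None]%SET|.

Lemma samedom_ext al be (a b : {ffun 'I_d -> nat}) : samedom al be -> samedom (ext al a b) (ext be b a).
Proof.
move=> sd i; have := sd i; rewrite /ext.
case: (al i) => [s|]; case: (be i) => [t|] //= _.
by rewrite [b i == a i]eq_sym; case: (a i == b i).
Qed.

Lemma fc_ext al (a b : {ffun 'I_d -> nat}) i : al i = None -> a i != b i -> (fc (ext al a b) < fc al)%N.
Proof.
move=> ali ab; apply: proper_card; apply/properP; split.
  apply/fintype.subsetP => j; rewrite !inE /ext; case: (al j) => //.
exists i; rewrite !inE ?ali //= /ext ali (negbTE ab) //.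
Qed.

Lemma fix_coord (a : {ffun 'I_d -> nat}) z i : valid a -> bpsi p a z = z ->
  z ord0 i = bq p i (a i) / (1 - p i (a i)).
Proof.
move=> va fz; have fzi : z ord0 i = p i (a i) * z ord0 i + bq p i (a i) by rewrite -{1}fz bpsiE.
have p1 : 1 - p i (a i) != 0 by rewrite subr_eq0 eq_sym lt_eqF // p_lt1.
apply: (mulIf p1); rewrite mulfVK //; lra.
Qed.

Lemma stab n : forall al be, samedom al be -> (fc al < n)%N ->
  Icond (bQ p D n) al be -> Icond K al be.
Proof.
elim: n => [//|n IH] al be sd fcn [x [y [Qx [Qy [fx [fy fe]]]]]].
move: Qx Qy => /= /bigcupP [a [x' [aD [Qx' ex]]]] /bigcupP [b [y' [bD [Qy' ey]]]].
subst x y.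
have va := validD aD; have vb := validD bD.
have [ma [mb [ad [fx' [fy' fe']]]]] :=
  PL_fwd va vb (bQ_cube Qx') (bQ_cube Qy') sd fx fy fe.
case: (pselect (forall i, al i = None -> a i = b i)) => [eqab|].
  have [za [Kza fza]] := fixK aD; have [zb [Kzb fzb]] := fixK bD.
  exists za, zb; split => //; split => //; split; [|split].
  - move=> i; move: (ma i); rewrite (fix_coord i va fza).
    case: (al i) => // [[]] E.
    + have e : bq p i (a i) = 1 - p i (a i) by have := bq_top E; lra.
      by rewrite e divff // subr_eq0 eq_sym lt_eqF // p_lt1.
    + by rewrite E bq0 mul0r.
  - move=> i; move: (mb i); rewrite (fix_coord i vb fzb).
    case: (be i) => // [[]] E.
    + have e : bq p i (b i) = 1 - p i (b i) by have := bq_top E; lra.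
      by rewrite e divff // subr_eq0 eq_sym lt_eqF // p_lt1.
    + by rewrite E bq0 mul0r.
  - by move=> i /eqab E; rewrite (fix_coord i va fza) (fix_coord i vb fzb) E.
move=> /existsNP [i /not_implyP [ali abi]].
have abi' : a i != b i by apply/eqP.
have [x'' [y'' [Kx [Ky [fx'' [fy'' fe'']]]]]] : Icond K (ext al a b) (ext be b a).
  apply: IH; [exact: samedom_ext | | by exists x', y'].
  by apply: (leq_trans (fc_ext ali abi')); rewrite -ltnS.
have [f1 [f2 f3]] := PL_bwd sd ma mb ad fx'' fy'' fe''.
exists (bpsi p a x''), (bpsi p b y''); split; first exact: K_psi.
split; first exact: K_psi.
by [].
Qed.

Lemma lebesgue (B : set 'rV[R]_d) :
  (exists2 Op, open Op & B = K `&` Op) -> (exists2 C, closed C & B = K `&` C) ->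
  exists2 e, 0 < e & forall x y, K x -> K y ->
    (forall i, `|x ord0 i - y ord0 i| < e) -> (B x <-> B y).
Proof.
move=> [Op oO BO] [C cC BC].
have loc : forall x, exists r, 0 < r /\ (K x -> forall y, K y -> ball x r y -> (B y <-> B x)).
  move=> x; case: (pselect (K x)) => Kx; last by exists 1; split.
  case: (pselect (B x)) => Bx.
    have Ox : Op x by move: Bx; rewrite BO => -[].
    have /nbhs_ballP [r r0 Hr] : nbhs x Op by apply: open_nbhs_nbhs; split.
    exists r; split => // _ y Ky bxy; split => // _.
    by rewrite BO; split => //; apply: Hr.
  have Cx : ~ C x by move=> Cx; apply: Bx; rewrite BC.
  have /nbhs_ballP [r r0 Hr] : nbhs x (~` C).
    by apply: open_nbhs_nbhs; split => //; exact: closed_openC.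
  exists r; split => // _ y Ky bxy; split => // By.
  by exfalso; apply: (Hr _ bxy); move: By; rewrite BC => -[].
have [r Hr] := choice loc.
have cov : K `<=` cover K (fun x => ball x (r x / 2)).
  move=> x Kx; exists x => //; apply: ballxx.
  by have [r0 _] := Hr x; rewrite divr_gt0.
have Kc : cover_compact K by rewrite -compact_cover.
have := Kc _ K (fun x => ball x (r x / 2)) _ cov.
case; first by move=> i _; exact: ball_open.
move=> D' D'K KD'.
have [e e0 He] := @seq_lbound _ (finmap.enum_fset D') (fun x => r x / 2)
  (fun t _ => ltac:(by have [r0 _] := Hr t; rewrite divr_gt0)).
exists e => // x y Kx Ky xy.
have [z zD' bzx] := KD' x Kx.
have Kz : K z by move: (D'K z zD'); rewrite inE.
have [rz0 Hz] := Hr z.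
have ez := He z zD'.
have bzy : ball z (r z) y.
  apply/ballE; split => // i; move: bzx => /ballE [_ /(_ i) h1].
  have h2 := xy i.
  have := ler_normD (z ord0 i - x ord0 i) (x ord0 i - y ord0 i).
  rewrite addrA subrK; lra.
have bzx' : ball z (r z) x.
  apply/ballE; split => // i; move: bzx => /ballE [_ /(_ i) h1]; lra.
by rewrite (Hz Kz _ Kx bzx') (Hz Kz _ Ky bzy).
Qed.

Definition E_inf (u v : {ffun 'I_d -> nat}) := exists z, (bpsi p u @` K) z /\ (bpsi p v @` K) z.
Definition Gconn (E : {ffun 'I_d -> nat} -> {ffun 'I_d -> nat} -> Prop) :=
  forall U : {ffun 'I_d -> nat} -> Prop, (exists u, u \in D /\ U u) ->
  (forall u v, u \in D -> v \in D -> U u -> E u v -> U v) -> forall u, u \in D -> U u.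

Lemma hata_step (c : R) : 0 < c < 1 -> (forall a i, valid a -> p i (a i) <= c) ->
  Gconn E_inf -> forall n (B : set 'rV[R]_d) e, (forall x, B x -> K x) ->
  (forall x y, K x -> K y -> (forall i, `|x ord0 i - y ord0 i| < e) -> (B x <-> B y)) ->
  c ^+ n < e -> (exists x, B x) -> forall x, K x -> B x.
Proof.
move=> /andP[c0 c1] Hc G; elim => [|n IH] B e BK Sat cn [x0 Bx0] x Kx.
  apply/(Sat x0 x (BK _ Bx0) Kx) => // i.
  rewrite expr0 in cn; apply: le_lt_trans cn.
  have := K_cube (BK _ Bx0) i; have := K_cube Kx i => /andP[? ?] /andP[? ?].
  rewrite ler_norml; apply/andP; split; lra.
have step : forall u, u \in D -> (exists y, K y /\ B (bpsi p u y)) ->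
    forall y, K y -> B (bpsi p u y).
  move=> u uD ne y Ky.
  suff : (fun y => K y /\ B (bpsi p u y)) y by case.
  apply: (IH (fun y => K y /\ B (bpsi p u y)) (e / c)) => //; first by move=> ? [].
  - move=> y1 y2 Ky1 Ky2 close; split => -[_ h]; split => //.
    + apply/(Sat _ _ (K_psi uD Ky1) (K_psi uD Ky2)) => // i.
      rewrite !bpsiE (_ : forall a b q : R, a * b + q - (a * y2 ord0 i + q) = a * (b - y2 ord0 i)); last by move=> *; ring.
      rewrite normrM ger0_norm ?ltW ?Hp ?(validD uD) //.
      have := close i; rewrite ltr_pdivlMr // => h2.
      apply: le_lt_trans h2; rewrite mulrC; apply: ler_wpM2l => //; exact: Hc (validD uD).
    + apply/(Sat _ _ (K_psi uD Ky1) (K_psi uD Ky2)) => // i.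
      rewrite !bpsiE (_ : forall a b q : R, a * b + q - (a * y2 ord0 i + q) = a * (b - y2 ord0 i)); last by move=> *; ring.
      rewrite normrM ger0_norm ?ltW ?Hp ?(validD uD) //.
      have := close i; rewrite ltr_pdivlMr // => h2.
      apply: le_lt_trans h2; rewrite mulrC; apply: ler_wpM2l => //; exact: Hc (validD uD).
  - by rewrite ltr_pdivlMr // -exprSr.
have HU := G (fun u => forall y, K y -> B (bpsi p u y)).
have [w [y [wD [Ky <-]]]] := K_dec Kx.
apply: HU => //.
  have [w0 [y0 [w0D [Ky0 ey0]]]] := K_dec (BK _ Bx0).
  by exists w0; split => //; apply: step => //; exists y0; rewrite ey0.
move=> u v uD vD Uu [z [[k Kk ek] [k' Kk' ek']]].
apply: step => //; exists k'; split => //; rewrite ek' -ek; exact: Uu.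
Qed.

Lemma hata : Gconn E_inf -> connected K.
Proof.
move=> G B B0 HO HC.
have [e e0 Sat] := lebesgue HO HC.
have [c [c01 Hc]] := contr.
have [n Hn] : exists n, c ^+ n < e.
  by apply: geo => //; case/andP: c01 => ? ?; rewrite ltW.
have BK : forall x, B x -> K x by case: HO => Op _ -> x [].
rewrite predeqE => x; split; first exact: BK.
have ne : exists y, B y by case: B0 => y By; exists y.
exact: (hata_step c01 Hc G BK Sat Hn ne).
Qed.

Lemma conn_Gconn (F : {ffun 'I_d -> nat} -> set 'rV[R]_d) (E : {ffun 'I_d -> nat} -> {ffun 'I_d -> nat} -> Prop) :
  (forall u, u \in D -> closed (F u)) -> (forall u, u \in D -> F u !=set0) ->
  (forall u v z, u \in D -> v \in D -> F u z -> F v z -> E u v) ->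
  connected (\bigcup_(u in [set` D]) F u) -> Gconn E.
Proof.
move=> cF neF EF cU U [u0 [u0D Uu0]] HU u1 u1D.
apply: contrapT => nU1.
pose A := \bigcup_(u in [set u | u \in D /\ U u]) F u.
pose A' := \bigcup_(u in [set u | u \in D /\ ~ U u]) F u.
have finA : forall P : {ffun 'I_d -> nat} -> Prop, finite_set [set u | u \in D /\ P u].
  move=> P; apply: (sub_finite_set _ (finite_seq D)) => u [uD _]; exact: uD.
have cA : closed A by apply: closed_bigcup => // u [uD _]; exact: cF.
have cA' : closed A' by apply: closed_bigcup => // u [uD _]; exact: cF.
have AU : A `<=` \bigcup_(u in [set` D]) F u by move=> z [u [uD _] Fz]; exists u.
have [z0 Fz0] := neF _ u0D.
have [z1 Fz1] := neF _ u1D.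
have eqA : A = \bigcup_(u in [set` D]) F u.
apply: cU.
- by exists z0, u0.
- exists (~` A'); first exact: closed_openC.
  rewrite predeqE => z; split.
    move=> Az; split; first exact: AU.
    case: Az => u [uD Uu] Fuz [v [vD nUv] Fvz]; apply: nUv; apply: (HU u) => //.
    exact: EF Fuz Fvz.
  move=> [[u uD Fuz] nA']; case: (pselect (U u)) => Uu; first by exists u.
  by exfalso; apply: nA'; exists u.
- exists A => //; rewrite predeqE => z; split; last by case.
  by move=> Az; split => //; exact: AU.
have : A z1 by rewrite eqA; exists u1.
case => u [uD Uu] Fuz1; apply: nU1; apply: (HU u) => //; exact: EF Fuz1 Fz1.
Qed.

Lemma psi_cont w : continuous (bpsi p w).
Proof.
move=> x A /nbhs_ballP [e e0 HA]; apply/nbhs_ballP.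
pose L := 1 + \sum_(i < d) `|p i (w i)|.
have L1 : 1 <= L by rewrite lerDl sumr_ge0.
have Lp : forall i, `|p i (w i)| <= L.
  move=> i; rewrite /L (bigD1 i) //= addrCA lerDl addr_ge0 // sumr_ge0 //.
have L0 : 0 < L by apply: lt_le_trans L1.
exists (e / L); first exact: divr_gt0.
move=> y /ballE [_ H]; apply: HA; apply/ballE; split => // i.
rewrite !bpsiE (_ : forall a b c q : R, a * b + q - (a * c + q) = a * (b - c)); last by move=> *; ring.
rewrite normrM; have := H i; rewrite ltr_pdivlMr // => h.
apply: le_lt_trans h; rewrite mulrC; apply: ler_wpM2l => //.
Qed.

Lemma cube_compact : compact (@unit_cube R d).
Proof.
have -> : @unit_cube R d = [set v : 'rV[R]_d | forall i, `[0, 1]%classic (v ord0 i)].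
  rewrite /unit_cube predeqE => x /=; split => H i; have := H i; by rewrite /= in_itv.
have h := (@rV_compact R d (fun=> `[0, 1]%classic)).
have := h (fun=> @segment_compact R 0 1). exact.
Qed.

Lemma bQ_compact n : compact (bQ p D n).
Proof.
elim: n => [|n IH]; first exact: cube_compact.
rewrite /= bigcup_seq big_seq; apply: bigsetU_compact => w _.
apply: continuous_compact => //; apply: continuous_subspaceT; exact: psi_cont.
Qed.

Lemma psiK_compact w : compact (bpsi p w @` K).
Proof. apply: continuous_compact => //; apply: continuous_subspaceT; exact: psi_cont. Qed.

Lemma psiQ_compact w n : compact (bpsi p w @` bQ p D n).
Proof.
apply: continuous_compact; last exact: bQ_compact.
apply: continuous_subspaceT; exact: psi_cont.
Qed.

Lemma cube_connected : connected (@unit_cube R d).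
Proof.
have -> : @unit_cube R d = \bigcup_(y in @unit_cube R d) ((fun t : R => t *: y) @` `[0, 1]%classic).
  rewrite predeqE => y; split.
    by move=> cy; exists y => //; exists 1; [rewrite /= in_itv /= ler01 lexx | rewrite scale1r].
  move=> [z cz [t]]; rewrite /= in_itv /= => /andP[t0 t1] <- i.
  rewrite mxE; have := cz i => /andP[z0 z1].
  apply/andP; split; [exact: mulr_ge0 | exact: mulr_ile1].
apply: bigcup_connected.
  exists 0 => y _; exists 0; first by rewrite /= in_itv /= lexx ler01.
  by rewrite scale0r.
move=> y _; apply: connected_continuous_connected; first exact: segment_connected.
apply: continuous_subspaceT; exact: scalel_continuous.
Qed.

Lemma psi_connected w X : connected X -> connected (bpsi p w @` X).
Proof.
move=> cX; apply: connected_continuous_connected => //.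
apply: continuous_subspaceT; exact: psi_cont.
Qed.

Lemma edge_Qd u v x y : u \in D -> v \in D -> bQ p D d x -> bQ p D d y ->
  bpsi p u x = bpsi p v y -> E_inf u v.
Proof.
move=> uD vD Qx Qy exy.
case: (eqVneq u v) => [<-|uv].
  by have [k Kk] := Kne; exists (bpsi p u k); split; exists k.
have [i ui] : exists i, u i != v i.
  apply: contrapT => /forallNP H; move/eqP: uv; apply; apply/ffunP => i.
  by have := H i; move/negP; rewrite negbK => /eqP.
pose none := fun _ : 'I_d => @None bool.
have sd : samedom none none by [].
have fn : forall z, face none z by [].
have [ma [mb [ad [fx' [fy' fe']]]]] :=
  PL_fwd (validD uD) (validD vD) (bQ_cube Qx) (bQ_cube Qy) sd (fn _) (fn _)
    (fun i _ => ltac:(by rewrite exy)).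
have fcd : (fc (ext none u v) < d)%N.
  have := @fc_ext none u v i erefl ui.
  have -> : fc none = d by rewrite /fc (_ : [set i | none i == None]%SET = [set: 'I_d]%SET) ?cardsT ?card_ord //; apply/setP => j; rewrite !inE.
  by [].
have [x'' [y'' [Kx [Ky [fx'' [fy'' fe'']]]]]] :=
  stab (samedom_ext u v sd) fcd (ex_intro _ x (ex_intro _ y (conj Qx (conj Qy (conj fx' (conj fy' fe')))))).
have [_ [_ f3]] := PL_bwd sd ma mb ad fx'' fy'' fe''.
exists (bpsi p u x''); split; first by exists x''.
exists y'' => //; apply/rowP => j; rewrite (f3 j erefl).
by rewrite !mxE.
Qed.

Lemma Q_conn : Gconn E_inf -> forall n, connected (bQ p D n).
Proof.
move=> G; elim => [|n IH]; first exact: cube_connected.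
move=> B B0 [Op oO BO] [Cl cC BC].
have side : forall u, u \in D -> forall z, (bpsi p u @` bQ p D n) z -> B z ->
    (bpsi p u @` bQ p D n) `<=` B.
  move=> u uD z Pz Bz.
  have sub : (bpsi p u @` bQ p D n) `<=` bQ p D n.+1 by move=> y Py; exists u.
  have cP := psi_connected (w:=u) IH.
  have e : (bpsi p u @` bQ p D n) `&` B = (bpsi p u @` bQ p D n).
  apply: cP.
  - by exists z.
  - exists Op => //; rewrite BO predeqE => y; split; first by move=> [Py [_ Oy]].
    by move=> [Py Oy]; split => //; split => //; apply: sub.
  - exists Cl => //; rewrite BC predeqE => y; split; first by move=> [Py [_ Oy]].
    by move=> [Py Oy]; split => //; split => //; apply: sub.
  by move=> y Py; rewrite -e in Py; case: Py.
have HU := G (fun u => (bpsi p u @` bQ p D n) `<=` B).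
have BQ : forall z, B z -> bQ p D n.+1 z by move=> z; rewrite BO => -[].
rewrite predeqE => z; split; first exact: BQ.
move=> [w wD Pw]; apply: (HU _ _ w wD) => //.
- case: B0 => z0 Bz0; have := BQ _ Bz0 => -[w0 w0D P0].
  by exists w0; split => //; apply: side Bz0.
- move=> u v uD vD Uu [y [[k Kk ek] [k' Kk' ek']]].
  apply: (side v vD y); first by exists k' => //; exact: K_bQ.
  by apply: Uu; exists k => //; exact: K_bQ.
Qed.

Lemma main_sec : connected K <-> connected (bQ p D d.+1).
Proof.
split => [cK|cQ].
- apply: Q_conn; apply: (@conn_Gconn (fun u => bpsi p u @` K)).
  + move=> u _; apply: compact_closed; [exact: norm_hausdorff | exact: psiK_compact].
  + move=> u _; have [k Kk] := Kne; by exists (bpsi p u k), k.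
  + by move=> u v z _ _ Fu Fv; exists z.
  + by rewrite -Kfix.
- apply: hata; apply: (@conn_Gconn (fun u => bpsi p u @` bQ p D d)).
  + move=> u _; apply: compact_closed; [exact: norm_hausdorff | exact: psiQ_compact].
  + move=> u _; have [k Kk] := Kne; by exists (bpsi p u k), k => //; exact: K_bQ.
  + by move=> u v z uD vD [x Qx ex] [y Qy ey]; apply: (edge_Qd uD vD Qx Qy); rewrite ex ey.
  + exact: cQ.
Qed.
End Barans.

Unset Implicit Arguments.

Theorem mainTheorem5 (R : realType) (d : nat) (N : 'I_d -> nat)
  (p : 'I_d -> nat -> R) (D : seq {ffun 'I_d -> nat}) (K : set 'rV[R]_d) :
  (2 <= d)%N ->
  (forall i, 2 <= N i)%N ->
  (forall i j, (j < N i)%N -> 0 < p i j) ->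
  (forall i, \sum_(j < N i) p i j = 1) ->
  uniq D ->
  (forall w, w \in D -> forall i, (w i < N i)%N) ->
  (1 < size D)%N -> (size D < \prod_(i < d) N i)%N ->
  compact K -> K !=set0 ->
  K = \bigcup_(w in [set` D]) (bpsi p w @` K) ->
  (connected K <-> connected (bQ p D d.+1)).
Proof.
move=> _ HN Hp Hs _ HD _ _ Kc Kn Kf.
exact: (@main_sec R d N p Hp Hs HN D HD K Kc Kn Kf).
Qed.
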